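(* Assume $k_{+\infty}=k_{-\infty}=:k_\infty$ and $k^2(x)\le k_\infty^2$ for all $x$. Let $\chi=\sqrt{k_\infty^2-k^2}$, and suppose $\chi$ is continuous and piecewise continuously differentiable and there is $x_0$ such that $\chi$ is nondecreasing on $(-\infty,x_0]$ and nonincreasing on $[x_0,\infty)$ (a single-hump barrier). Then $$T\ \ge\ \mathrm{sech}^2\left\{\frac{\max_x\sqrt{k_\infty^2-k^2(x)}}{k_\infty}+\int_{-\infty}^{\infty}\sqrt{k_\infty^2-k^2}\;\mathrm{d}x\right\}.$$ In quantum-mechanical notation, with $k^2=2m(E-V)/\hbar^2$, $V\ge0$, $V\to0$ at $\pm\infty$, $E>0$ and $V$ single-humped with maximum $V_{\max}$, this reads $T\ge\mathrm{sech}^2\{\sqrt{V_{\max}/E}+\int_{-\infty}^{\infty}\sqrt{2mV}/\hbar\,\mathrm{d}x\}$.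
   Context: Standing setup: $k^2:\mathbb{R}\to\mathbb{R}$ is a piecewise continuous function with $k^2(x)\to k_{\pm\infty}^2$ as $x\to\pm\infty$, where $k_{\pm\infty}>0$ and $k^2-k_{\pm\infty}^2$ is integrable near $\pm\infty$. For the equation $u''+k^2(x)u=0$ there is a solution with $u(x)=e^{ik_{-\infty}x}+r\,e^{-ik_{-\infty}x}+o(1)$ as $x\to-\infty$ and $u(x)=\tau\,e^{ik_{+\infty}x}+o(1)$ as $x\to+\infty$; the transmission probability is $T=(k_{+\infty}/k_{-\infty})|\tau|^2$. Here $\mathrm{sech}=1/\cosh$, and if the integral equals $+\infty$ the bound is read as the trivial statement $T\ge 0$. *)

(* Defs.v *)
From Stdlib Require Import Reals Lra List.
Open Scope R_scope.

Definition sech (x : R) : R := 1 / cosh x.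

Definition locally_finite (D : R -> Prop) : Prop :=
  forall a b : R, exists l : list R, forall x, D x -> a <= x <= b -> In x l.

Definition has_right_limit (f : R -> R) (x : R) : Prop :=
  exists l : R, forall eps, 0 < eps -> exists delta, 0 < delta /\
    forall y, x < y < x + delta -> Rabs (f y - l) < eps.

Definition has_left_limit (f : R -> R) (x : R) : Prop :=
  exists l : R, forall eps, 0 < eps -> exists delta, 0 < delta /\
    forall y, x - delta < y < x -> Rabs (f y - l) < eps.

Definition piecewise_continuous (f : R -> R) : Prop :=
  exists D : R -> Prop, locally_finite D /\
    (forall x, ~ D x -> continuity_pt f x) /\
    (forall x, D x -> has_left_limit f x /\ has_right_limit f x).

Definition piecewise_C1 (f : R -> R) : Prop :=
  exists (D : R -> Prop) (f' : R -> R), locally_finite D /\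
    (forall x, ~ D x -> derivable_pt_lim f x (f' x) /\ continuity_pt f' x) /\
    (forall x, D x -> has_left_limit f' x /\ has_right_limit f' x).

Definition tends_to_pinf (f : R -> R) (l : R) : Prop :=
  forall eps, 0 < eps -> exists A, forall x, A <= x -> Rabs (f x - l) < eps.

Definition tends_to_minf (f : R -> R) (l : R) : Prop :=
  forall eps, 0 < eps -> exists A, forall x, x <= A -> Rabs (f x - l) < eps.

Definition integrable_near_pinf (f : R -> R) : Prop :=
  exists A : R,
    (forall b, A <= b -> inhabited (Riemann_integrable (fun x => Rabs (f x)) A b)) /\
    exists B : R, forall b (pr : Riemann_integrable (fun x => Rabs (f x)) A b),
      A <= b -> RiemannInt pr <= B.

Definition integrable_near_minf (f : R -> R) : Prop :=
  exists A : R,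
    (forall a, a <= A -> inhabited (Riemann_integrable (fun x => Rabs (f x)) a A)) /\
    exists B : R, forall a (pr : Riemann_integrable (fun x => Rabs (f x)) a A),
      a <= A -> RiemannInt pr <= B.

Definition improper_integral (f : R -> R) (I : R) : Prop :=
  (forall a b, a <= b -> inhabited (Riemann_integrable f a b)) /\
  forall eps, 0 < eps -> exists A, forall a b (pr : Riemann_integrable f a b),
    a <= - A -> A <= b -> Rabs (RiemannInt pr - I) < eps.

Definition is_solution (k2 : R -> R) (v : R -> R) : Prop :=
  exists v' : R -> R,
    (forall x, derivable_pt_lim v x (v' x)) /\
    continuity v' /\
    (forall x, continuity_pt k2 x -> derivable_pt_lim v' x (- k2 x * v x)).

(* transmission probability T = (k_{+inf}/k_{-inf}) |tau|^2, tau = tr + i ti *)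
Definition transmission (kp km tr ti : R) : R := kp / km * (tr ^ 2 + ti ^ 2).

(* Main.v *)
Require Import Defs.
From Stdlib Require Import Reals Lra Psatz List ClassicalEpsilon FunctionalExtensionality.
Open Scope R_scope.

Notation D := derivable_pt_lim.

Lemma D_eq f x a b : D f x a -> a = b -> D f x b.
Proof. intros H ->; exact H. Qed.
Lemma D_plus f g x a b : D f x a -> D g x b -> D (fun y => f y + g y) x (a+b).
Proof. intros; exact (derivable_pt_lim_plus f g x a b H H0). Qed.
Lemma D_minus f g x a b : D f x a -> D g x b -> D (fun y => f y - g y) x (a-b).
Proof. intros; exact (derivable_pt_lim_minus f g x a b H H0). Qed.
Lemma D_mult f g x a b : D f x a -> D g x b -> D (fun y => f y * g y) x (a * g x + f x * b).
Proof. intros; exact (derivable_pt_lim_mult f g x a b H H0). Qed.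
Lemma D_const c x : D (fun _ => c) x 0.
Proof. exact (derivable_pt_lim_const c x). Qed.
Lemma D_id x : D (fun y => y) x 1.
Proof. exact (derivable_pt_lim_id x). Qed.
Lemma D_inv f x a : D f x a -> f x <> 0 -> D (fun y => / f y) x (- a / (f x)^2).
Proof. intros H H0.
  assert (H1 := derivable_pt_lim_div (fun _ => 1) f x 0 a (D_const 1 x) H H0).
  eapply D_eq. { eapply derivable_pt_lim_ext; [|exact H1]. intro z; unfold div_fct, Rdiv; ring. }
  unfold Rsqr; field; auto.
Qed.
Lemma D_comp f g x a b : D f x a -> D g (f x) b -> D (fun y => g (f y)) x (b * a).
Proof. intros H1 H2. exact (derivable_pt_lim_comp f g x a b H1 H2). Qed.
Lemma D_sqrt f x a : D f x a -> 0 < f x -> D (fun y => sqrt (f y)) x (a / (2 * sqrt (f x))).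
Proof. intros H H0. eapply D_eq. apply (D_comp f sqrt x a (/ (2 * sqrt (f x))) H). apply derivable_pt_lim_sqrt; auto.
  field. apply Rgt_not_eq. apply sqrt_lt_R0; auto. Qed.
Lemma D_exp f x a : D f x a -> D (fun y => exp (f y)) x (exp (f x) * a).
Proof. intros H. apply (D_comp f exp x a (exp (f x)) H). apply derivable_pt_lim_exp. Qed.
Lemma D_lin c x : D (fun y => c * y) x c.
Proof. eapply D_eq. apply D_mult. apply D_const. apply D_id. simpl. ring. Qed.
Lemma D_cos c x : D (fun y => cos (c * y)) x (- c * sin (c * x)).
Proof. eapply D_eq. apply (D_comp (fun y => c * y) cos x c (- sin (c*x))).
  apply D_lin. apply derivable_pt_lim_cos. ring. Qed.
Lemma D_sin c x : D (fun y => sin (c * y)) x (c * cos (c * x)).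
Proof. eapply D_eq. apply (D_comp (fun y => c * y) sin x c (cos (c*x))).
  apply D_lin. apply derivable_pt_lim_sin. ring. Qed.
Lemma D_sq f x a : D f x a -> D (fun y => f y ^ 2) x (2 * f x * a).
Proof. intros H. eapply D_eq. eapply derivable_pt_lim_ext with (f := fun y => f y * f y).
  intro; ring. apply D_mult; eauto. ring. Qed.

Lemma Rdiv_le_0_compat a b : 0 <= a -> 0 < b -> 0 <= a / b.
Proof. intros; unfold Rdiv; apply Rmult_le_pos; [auto| left; apply Rinv_0_lt_compat; auto]. Qed.
Lemma Rabs_le_inv x a : Rabs x <= a -> - a <= x <= a.
Proof. intros H. pose proof (Rle_abs x). pose proof (Rle_abs (-x)). rewrite Rabs_Ropp in H1. lra. Qed.
Definition ev (s:bool) (A x:R) : Prop := if s then A <= x else x <= A.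
Definition lim (s:bool) (f:R->R) (l:R) : Prop :=
  forall eps, 0<eps -> exists A, forall x, ev s A x -> Rabs (f x - l) < eps.
Definition approx s (f F : R -> R) := lim s (fun x => f x - F x) 0.
Definition bnd (F : R -> R) := exists Bd, forall x, Rabs (F x) <= Bd.

Lemma ev_both s A1 A2 : exists A, forall x, ev s A x -> ev s A1 x /\ ev s A2 x.
Proof. destruct s; simpl.
  - exists (Rmax A1 A2); intros x H; split; eapply Rle_trans; eauto; [apply Rmax_l|apply Rmax_r].
  - exists (Rmin A1 A2); intros x H; split; eapply Rle_trans; eauto; [apply Rmin_l|apply Rmin_r].
Qed.

Lemma lim_ext s f g l : (forall x, f x = g x) -> lim s f l -> lim s g l.
Proof. intros E H eps He. destruct (H eps He) as [A HA]. exists A; intros x Hx. rewrite <- E; auto. Qed.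

Lemma approx_ext s f g F G : (forall x, f x = g x) -> (forall x, F x = G x) -> approx s f F -> approx s g G.
Proof. intros E1 E2 H. unfold approx in *. eapply lim_ext; [|exact H]. intro; simpl; rewrite E1, E2; auto. Qed.

Lemma approx_lim s f L : approx s f (fun _ => L) -> lim s f L.
Proof. intros H eps He. destruct (H eps He) as [A HA]. exists A; intros x Hx.
  specialize (HA x Hx). rewrite Rminus_0_r in HA. auto. Qed.
Lemma lim_approx s f L : lim s f L -> approx s f (fun _ => L).
Proof. intros H eps He. destruct (H eps He) as [A HA]. exists A; intros x Hx.
  rewrite Rminus_0_r. auto. Qed.

Lemma approx_refl s F : approx s F F.
Proof. intros eps He. exists 0. intros. replace (F x - F x - 0) with 0 by ring. rewrite Rabs_R0; auto. Qed.

Lemma approx_plus s f g F G : approx s f F -> approx s g G ->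
  approx s (fun x => f x + g x) (fun x => F x + G x).
Proof. intros H1 H2 eps He. destruct (H1 (eps/2)) as [A1 HA1]; [lra|].
  destruct (H2 (eps/2)) as [A2 HA2]; [lra|]. destruct (ev_both s A1 A2) as [A HA].
  exists A; intros x Hx. destruct (HA x Hx) as [X1 X2]. specialize (HA1 x X1); specialize (HA2 x X2).
  rewrite Rminus_0_r in *. replace (f x + g x - (F x + G x)) with ((f x - F x) + (g x - G x)) by ring.
  eapply Rle_lt_trans. apply Rabs_triang. lra. Qed.

Lemma approx_scal s c f F : approx s f F -> approx s (fun x => c * f x) (fun x => c * F x).
Proof. intros H eps He. destruct (H (eps / (Rabs c + 1))) as [A HA].
  { apply Rdiv_lt_0_compat; auto. pose proof (Rabs_pos c); lra. }
  exists A; intros x Hx. specialize (HA x Hx). rewrite Rminus_0_r in *.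
  replace (c * f x - c * F x) with (c * (f x - F x)) by ring. rewrite Rabs_mult.
  pose proof (Rabs_pos c). pose proof (Rabs_pos (f x - F x)).
  apply Rle_lt_trans with ((Rabs c + 1) * Rabs (f x - F x)). nra.
  replace eps with ((Rabs c + 1) * (eps / (Rabs c + 1))) by (field; lra).
  apply Rmult_lt_compat_l; lra. Qed.

Lemma approx_opp s f F : approx s f F -> approx s (fun x => - f x) (fun x => - F x).
Proof. intros H. eapply approx_ext; [| |apply (approx_scal s (-1) f F H)]; intro; simpl; ring. Qed.

Lemma approx_minus s f g F G : approx s f F -> approx s g G ->
  approx s (fun x => f x - g x) (fun x => F x - G x).
Proof. intros H1 H2. eapply approx_ext; [| |apply (approx_plus s _ _ _ _ H1 (approx_opp s _ _ H2))];
  intro; simpl; ring. Qed.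

Lemma null_bnd s f g Bd : lim s f 0 -> (exists A, forall x, ev s A x -> Rabs (g x) <= Bd) ->
  lim s (fun x => f x * g x) 0.
Proof. intros H [A0 HA0] eps He. destruct (H (eps / (Rabs Bd + 1))) as [A HA].
  { apply Rdiv_lt_0_compat; auto. pose proof (Rabs_pos Bd); lra. }
  destruct (ev_both s A A0) as [A' HA']. exists A'; intros x Hx. destruct (HA' x Hx) as [X1 X2].
  specialize (HA x X1); specialize (HA0 x X2). rewrite Rminus_0_r in *. rewrite Rabs_mult.
  pose proof (Rabs_pos (f x)). pose proof (Rabs_pos (g x)). pose proof (Rle_abs Bd).
  apply Rle_lt_trans with (Rabs (f x) * (Rabs Bd + 1)). apply Rmult_le_compat_l; lra.
  replace eps with ((eps / (Rabs Bd + 1)) * (Rabs Bd + 1)) by (field; pose proof (Rabs_pos Bd); lra).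
  apply Rmult_lt_compat_r; [pose proof (Rabs_pos Bd); lra| auto]. Qed.

Lemma approx_bnd s f F : approx s f F -> bnd F -> exists Bd, exists A, forall x, ev s A x -> Rabs (f x) <= Bd.
Proof. intros H [B HB]. destruct (H 1 Rlt_0_1) as [A HA]. exists (B + 1), A. intros x Hx.
  specialize (HA x Hx); specialize (HB x). rewrite Rminus_0_r in HA.
  replace (f x) with ((f x - F x) + F x) by ring. eapply Rle_trans. apply Rabs_triang. lra. Qed.

Lemma approx_mult s f g F G : approx s f F -> approx s g G -> bnd F -> bnd G ->
  approx s (fun x => f x * g x) (fun x => F x * G x).
Proof. intros H1 H2 B1 B2.
  destruct (approx_bnd s g G H2 B2) as [Bg HBg]. destruct B1 as [BF HBF].
  assert (E: approx s (fun x => (f x - F x) * g x + F x * (g x - G x)) (fun _ => 0 + 0)).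
  { apply approx_plus; apply lim_approx.
    - apply null_bnd with Bg; auto. 
    - eapply lim_ext; [|apply (null_bnd s (fun x => g x - G x) F BF)]. intro; simpl; ring.
      apply H2. exists 0; auto. }
  unfold approx in *. eapply lim_ext; [|exact E]. intro; simpl; ring. Qed.

Lemma bnd_const c : bnd (fun _ => c). Proof. exists (Rabs c); auto with real. Qed.
Lemma bnd_plus F G : bnd F -> bnd G -> bnd (fun x => F x + G x).
Proof. intros [a Ha] [b Hb]; exists (a+b); intro x; eapply Rle_trans; [apply Rabs_triang|]; specialize (Ha x); specialize (Hb x); lra. Qed.
Lemma bnd_mult F G : bnd F -> bnd G -> bnd (fun x => F x * G x).
Proof. intros [a Ha] [b Hb]; exists (a*b); intro x; rewrite Rabs_mult; apply Rmult_le_compat; auto using Rabs_pos. Qed.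
Lemma bnd_cos c : bnd (fun x => cos (c * x)). Proof. exists 1; intro; apply Rabs_le; apply COS_bound. Qed.
Lemma bnd_sin c : bnd (fun x => sin (c * x)). Proof. exists 1; intro; apply Rabs_le; apply SIN_bound. Qed.
Lemma bnd_ext F G : (forall x, F x = G x) -> bnd F -> bnd G.
Proof. intros E [a Ha]; exists a; intro x; rewrite <- E; auto. Qed.

Lemma lim_unique_const s c L : lim s (fun _ => c) L -> c = L.
Proof. intros H. destruct (Req_dec c L) as [|n]; auto. exfalso.
  assert (0 < Rabs (c - L)) by (apply Rabs_pos_lt; lra).
  destruct (H _ H0) as [A HA]. specialize (HA A). destruct s; simpl in HA; lra. Qed.

Lemma cont_eps f x : continuity_pt f x -> forall e, 0 < e -> exists d, 0 < d /\ forall y, Rabs (y - x) < d -> Rabs (f y - f x) < e.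
Proof. intros H e He. destruct (H e He) as [d [Hd Hd2]]. exists d; split; auto. intros y Hy.
  destruct (Req_dec y x) as [->|n]. replace (f x - f x) with 0 by ring; rewrite Rabs_R0; auto.
  apply (Hd2 y). split. unfold D_x, no_cond; split; auto. simpl; unfold R_dist; auto. Qed.

Lemma lim_comp_cont s f L g : lim s f L -> continuity_pt g L -> lim s (fun x => g (f x)) (g L).
Proof. intros H C eps He. destruct (cont_eps g L C eps He) as [d [Hd Hd2]].
  destruct (H d Hd) as [A HA]. exists A; intros; apply Hd2; auto. Qed.
Lemma core_mvt w w' w'' a x e1 e2 : (forall y, D w y (w' y)) -> (forall y, D w' y (w'' y)) ->
  (x = a \/ x = a+1) -> (forall y, a <= y <= a+1 -> Rabs (w y) <= e1 /\ Rabs (w'' y) <= e2) ->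
  Rabs (w' x) <= 2*e1 + e2.
Proof. intros H1 H2 Hx H.
  destruct (MVT_cor2 w w' a (a+1)) as [c [Hc1 Hc2]]; [lra| intros; apply H1|].
  replace (a + 1 - a) with 1 in Hc1 by ring. rewrite Rmult_1_r in Hc1.
  assert (Hw: Rabs (w' c) <= 2 * e1).
  { rewrite <- Hc1. eapply Rle_trans; [apply Rabs_triang|]. rewrite Rabs_Ropp.
    destruct (H a) as [A1 _]; [lra|]. destruct (H (a+1)) as [A2 _]; [lra|]. lra. }
  assert (Hd: exists d, a <= d <= a + 1 /\ Rabs (w' x - w' c) <= Rabs (w'' d)).
  { destruct Hx as [->| ->].
    - destruct (MVT_cor2 w' w'' a c) as [d [Hd1 Hd2]]; [lra| intros; apply H2|].
      exists d; split; [lra|]. replace (w' a - w' c) with (- (w' c - w' a)) by ring.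
      rewrite Rabs_Ropp, Hd1, Rabs_mult. rewrite (Rabs_right (c - a)) by lra.
      pose proof (Rabs_pos (w'' d)). nra.
    - destruct (MVT_cor2 w' w'' c (a+1)) as [d [Hd1 Hd2]]; [lra| intros; apply H2|].
      exists d; split; [lra|]. rewrite Hd1, Rabs_mult. rewrite (Rabs_right (a + 1 - c)) by lra.
      pose proof (Rabs_pos (w'' d)). nra. }
  destruct Hd as [d [Hd1 Hd2]]. destruct (H d Hd1) as [_ Hd3].
  replace (w' x) with ((w' x - w' c) + w' c) by ring. eapply Rle_trans; [apply Rabs_triang|]. lra.
Qed.

Lemma asym s (u v q : R->R) k al be : (forall x, D u x (v x)) -> (forall x, D v x (- q x * u x)) ->
  lim s q (k^2) -> approx s u (fun x => al * cos (k*x) + be * sin (k*x)) ->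
  approx s v (fun x => k * (be * cos (k*x) - al * sin (k*x))).
Proof. intros Hu Hv Hq Ha.
  set (g := fun x => al * cos (k*x) + be * sin (k*x)).
  set (g' := fun x => k * (be * cos (k*x) - al * sin (k*x))).
  set (g'' := fun x => - k^2 * g x).
  assert (Dg : forall x, D g x (g' x)).
  { intro x. unfold g, g'. eapply D_eq. apply D_plus; apply D_mult; try apply D_const.
    apply D_cos. apply D_sin. cbv beta; ring. }
  assert (Dg' : forall x, D g' x (g'' x)).
  { intro x. unfold g', g'', g. eapply D_eq. apply D_mult. apply D_const. apply D_minus; apply D_mult; try apply D_const.
    apply D_cos. apply D_sin. cbv beta; ring. }
  destruct (approx_bnd s u g Ha) as [Bu [A0 HBu]].
  { apply bnd_plus; apply bnd_mult; auto using bnd_const, bnd_cos, bnd_sin. }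
  intros eps He.
  set (eta := eps / (2 * (3 + Rabs Bu + k^2))).
  assert (Heta : 0 < eta). { unfold eta. apply Rdiv_lt_0_compat; auto. pose proof (Rabs_pos Bu). nra. }
  destruct (Ha eta Heta) as [A1 HA1]. destruct (Hq eta Heta) as [A2 HA2].
  destruct (ev_both s A1 A2) as [A3 HA3]. destruct (ev_both s A3 A0) as [A HA].
  exists A. intros x Hx.
  assert (Hreg : forall y, ev s A y -> Rabs (u y - g y) <= eta /\ Rabs (-q y * u y - g'' y) <= eta * (Rabs Bu + k^2)).
  { intros y Hy. destruct (HA y Hy) as [Y3 Y0]. destruct (HA3 y Y3) as [Y1 Y2].
    specialize (HA1 y Y1); specialize (HA2 y Y2); specialize (HBu y Y0). cbv beta in HA1, HA2. rewrite Rminus_0_r in HA1.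
    change (al * cos (k * y) + be * sin (k * y)) with (g y) in HA1. split; [lra|]. unfold g''.
    replace (-q y * u y - - k ^ 2 * g y) with ((k^2 - q y) * u y - k^2 * (u y - g y)) by ring.
    eapply Rle_trans; [apply Rabs_triang|]. rewrite Rabs_Ropp, !Rabs_mult.
    rewrite (Rabs_right (k^2)) by (apply Rle_ge; apply pow2_ge_0).
    rewrite <- Rabs_Ropp in HA2. replace (-(q y - k^2)) with (k^2 - q y) in HA2 by ring.
    pose proof (Rabs_pos (k^2 - q y)). pose proof (Rabs_pos (u y)). pose proof (Rle_abs Bu).
    pose proof (pow2_ge_0 k).
    assert (Rabs (k ^ 2 - q y) * Rabs (u y) <= eta * Rabs Bu) by (apply Rmult_le_compat; lra).
    assert (k^2 * Rabs (u y - g y) <= k^2 * eta) by (apply Rmult_le_compat_l; lra). nra. }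
  assert (Hw : Rabs (v x - g' x) <= 2 * eta + eta * (Rabs Bu + k^2)).
  { apply (core_mvt (fun y => u y - g y) (fun y => v y - g' y) (fun y => - q y * u y - g'' y)
            (if s then x else x - 1) x).
    - intro; apply D_minus; auto.
    - intro; apply D_minus; auto.
    - destruct s; [left; auto | right; ring].
    - intros y Hy. apply Hreg. destruct s; simpl in *; lra. }
  rewrite Rminus_0_r. eapply Rle_lt_trans; [exact Hw|].
  unfold eta. pose proof (Rabs_pos Bu). pose proof (pow2_ge_0 k).
  apply Rmult_lt_reg_r with (2 * (3 + Rabs Bu + k^2)); [lra|].
  field_simplify; [|lra]. nra.
Qed.
Lemma mon_base f a b : a <= b -> (forall x, a <= x <= b -> continuity_pt f x) ->
  (forall x, a < x < b -> exists d, D f x d /\ 0 <= d) -> f a <= f b.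
Proof. intros Hab Hc Hd. destruct (Req_dec a b) as [->|n]; [lra|].
  assert (Hlt: a < b) by lra.
  set (pr1 := fun c (P : a < c < b) =>
     let s := constructive_indefinite_description _ (Hd c P) in
     exist (fun l => derivable_pt_abs f c l) (proj1_sig s) (proj1 (proj2_sig s)) : derivable_pt f c).
  set (pr2 := fun c (P : a < c < b) => derivable_pt_id c).
  destruct (MVT f id a b pr1 pr2 Hlt Hc) as [c [P HP]].
  { intros; apply derivable_continuous_pt, derivable_pt_id. }
  unfold pr1, pr2 in HP. simpl in HP. rewrite derive_pt_id in HP. unfold id in HP.
  pose proof (proj2 (proj2_sig (constructive_indefinite_description _ (Hd c P)))) as Hdc. nra. Qed.

Lemma mon_list f (l : list R) : forall a b, a <= b -> (forall x, a <= x <= b -> continuity_pt f x) ->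
  (forall x, a < x < b -> ~ In x l -> exists d, D f x d /\ 0 <= d) -> f a <= f b.
Proof. induction l as [|p l IH]; intros a b Hab Hc Hd.
  - apply (mon_base f); auto; intros; apply Hd; auto.
  - destruct (Rlt_dec a p) as [H1|H1]; [destruct (Rlt_dec p b) as [H2|H2]|].
    + apply Rle_trans with (f p).
      * apply IH; [lra| intros; apply Hc; lra|]. intros x Hx Hn. apply Hd; [lra|].
        intros [E|E]; [lra|auto].
      * apply IH; [lra| intros; apply Hc; lra|]. intros x Hx Hn. apply Hd; [lra|].
        intros [E|E]; [lra|auto].
    + apply IH; auto. intros x Hx Hn. apply Hd; auto. intros [E|E]; [lra|auto].
    + apply IH; auto. intros x Hx Hn. apply Hd; auto. intros [E|E]; [lra|auto].
Qed.

Lemma mon_lf f (Dset : R -> Prop) a b : locally_finite Dset -> a <= b ->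
  (forall x, a <= x <= b -> continuity_pt f x) ->
  (forall x, a < x < b -> ~ Dset x -> exists d, D f x d /\ 0 <= d) -> f a <= f b.
Proof. intros Hlf Hab Hc Hd. destruct (Hlf a b) as [l Hl].
  apply (mon_list f l a b Hab Hc). intros x Hx Hn. apply Hd; auto.
  intro HD. apply Hn, Hl; auto; lra. Qed.

Lemma deriv_nondec f x l x0 : x < x0 -> (forall y z, y <= z <= x0 -> f y <= f z) -> D f x l -> 0 <= l.
Proof. intros Hx Hm H. destruct (Rle_dec 0 l) as [|n]; auto. exfalso.
  destruct (H (- l / 2)) as [del Hdel]; [lra|].
  set (h := Rmin (del/2) ((x0 - x)/2)).
  assert (Hh : 0 < h). { unfold h; apply Rmin_glb_lt; pose proof (cond_pos del); lra. }
  assert (Hh2 : h <= (x0 - x)/2) by apply Rmin_r.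
  assert (Hh3 : h <= del/2) by apply Rmin_l.
  specialize (Hdel h (Rgt_not_eq _ _ Hh)). rewrite Rabs_right in Hdel by lra.
  specialize (Hdel ltac:(pose proof (cond_pos del); lra)).
  assert (f x <= f (x+h)) by (apply Hm; lra).
  assert (0 <= (f (x+h) - f x)/h) by (apply Rdiv_le_0_compat; lra).
  apply Rabs_def2 in Hdel. lra. Qed.

Lemma deriv_noninc f x l x0 : x0 < x -> (forall y z, x0 <= y <= z -> f z <= f y) -> D f x l -> l <= 0.
Proof. intros Hx Hm H. destruct (Rle_dec l 0) as [|n]; auto. exfalso.
  destruct (H (l / 2)) as [del Hdel]; [lra|].
  set (h := - Rmin (del/2) ((x - x0)/2)).
  assert (Hh : h < 0). { unfold h; apply Ropp_lt_gt_0_contravar, Rmin_glb_lt; pose proof (cond_pos del); lra. }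
  assert (Hh2 : -h <= (x - x0)/2) by (unfold h; rewrite Ropp_involutive; apply Rmin_r).
  assert (Hh3 : -h <= del/2) by (unfold h; rewrite Ropp_involutive; apply Rmin_l).
  specialize (Hdel h (Rlt_not_eq _ _ Hh)). rewrite Rabs_left in Hdel by lra.
  specialize (Hdel ltac:(pose proof (cond_pos del); lra)).
  assert (f x <= f (x+h)) by (apply Hm; lra).
  assert ((f (x+h) - f x)/h <= 0).
  { replace ((f (x+h) - f x)/h) with (- ((f (x+h) - f x)/(-h))) by (field; lra).
    assert (0 <= (f (x+h) - f x)/(-h)) by (apply Rdiv_le_0_compat; lra). lra. }
  apply Rabs_def2 in Hdel. lra. Qed.
Lemma abs_le_sqrt a b : Rabs a <= sqrt (a^2 + b^2).
Proof. rewrite <- sqrt_Rsqr_abs. apply sqrt_le_1_alt. unfold Rsqr. nra. Qed.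

Lemma P2W2 ur ui vr vi h : 0 < h ->
  ((vr^2+vi^2 + h^2*(ur^2+ui^2))/(2*h))^2 - (ur*vi - ui*vr)^2 =
  ((2*h*(ur*vr+ui*vi))^2 + (h^2*(ur^2+ui^2) - (vr^2+vi^2))^2) / (2*h)^2.
Proof. intros. field. lra. Qed.

Lemma key_ineq ur ui vr vi h c chi : 0 < h -> 0 <= chi ->
  Rabs (2*chi*(ur*vr+ui*vi) + c*(h^2*(ur^2+ui^2) - (vr^2+vi^2))/(2*h^2))
  <= (Rabs c / h + 2*chi) * sqrt (((vr^2+vi^2 + h^2*(ur^2+ui^2))/(2*h))^2 - (ur*vi - ui*vr)^2).
Proof. intros Hh Hc. rewrite P2W2 by auto.
  set (Z1 := 2*h*(ur*vr+ui*vi)). set (Z2 := h^2*(ur^2+ui^2) - (vr^2+vi^2)).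
  assert (Hs : sqrt ((Z1^2 + Z2^2)/(2*h)^2) = sqrt (Z1^2+Z2^2) / (2*h)).
  { rewrite sqrt_div_alt by nra. rewrite sqrt_pow2 by lra. auto. }
  rewrite Hs.
  assert (E : 2*chi*(ur*vr+ui*vi) + c*Z2/(2*h^2) = chi/h * Z1 + c/(2*h^2) * Z2) by (unfold Z1; field; lra).
  rewrite E.
  pose proof (abs_le_sqrt Z1 Z2) as HZ1. pose proof (abs_le_sqrt Z2 Z1) as HZ2.
  replace (Z2^2 + Z1^2) with (Z1^2+Z2^2) in HZ2 by ring.
  eapply Rle_trans. apply Rabs_triang. rewrite !Rabs_mult.
  rewrite (Rabs_right (chi/h)) by (apply Rle_ge, Rdiv_le_0_compat; lra).
  assert (Rabs (c/(2*h^2)) = Rabs c/(2*h^2)) as ->.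
  { unfold Rdiv. rewrite Rabs_mult, (Rabs_right (/ _)); auto. left; apply Rinv_0_lt_compat; nra. }
  pose proof (Rabs_pos c). pose proof (Rabs_pos Z1). pose proof (Rabs_pos Z2).
  assert (chi / h * Rabs Z1 <= chi / h * sqrt (Z1^2+Z2^2)) by (apply Rmult_le_compat_l; [apply Rdiv_le_0_compat|]; lra).
  assert (Rabs c / (2 * h ^ 2) * Rabs Z2 <= Rabs c / (2 * h ^ 2) * sqrt (Z1^2+Z2^2)) by (apply Rmult_le_compat_l; [apply Rdiv_le_0_compat|]; nra).
  replace ((Rabs c / h + 2 * chi) * (sqrt (Z1^2+Z2^2) / (2 * h))) with (chi / h * sqrt (Z1^2+Z2^2) + Rabs c / (2 * h ^ 2) * sqrt (Z1^2+Z2^2)) by (field; lra).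
  lra. Qed.
Definition hF k (chi : R -> R) y := k + chi y.
Definition PF k chi (ur ui vr vi : R -> R) y :=
  (vr y^2 + vi y^2 + hF k chi y^2 * (ur y^2 + ui y^2)) / (2 * hF k chi y).
Definition WF (ur ui vr vi : R -> R) y := ur y * vi y - ui y * vr y.
Definition GF k eps chi ur ui vr vi y :=
  PF k chi ur ui vr vi y + sqrt (PF k chi ur ui vr vi y ^2 - WF ur ui vr vi y ^2 + eps).

Lemma DP (ur ui vr vi k2 chi : R -> R) k c x : 0 < k -> 0 <= chi x ->
  D ur x (vr x) -> D ui x (vi x) -> D vr x (- k2 x * ur x) -> D vi x (- k2 x * ui x) ->
  D chi x c -> k2 x = k^2 - chi x ^2 ->
  D (PF k chi ur ui vr vi) x
    (2*chi x*(ur x*vr x+ui x*vi x) + c*(hF k chi x^2*(ur x^2+ui x^2) - (vr x^2+vi x^2))/(2*hF k chi x^2)).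
Proof. intros Hk Hc Dur Dui Dvr Dvi Dchi Ek2.
  assert (Hh : 0 < hF k chi x) by (unfold hF; lra).
  assert (Dh : D (hF k chi) x c).
  { unfold hF. eapply D_eq. apply D_plus. apply D_const. apply Dchi. ring. }
  unfold PF. eapply D_eq.
  { eapply derivable_pt_lim_ext with (f := fun y => (vr y^2 + vi y^2 + hF k chi y^2 * (ur y^2 + ui y^2)) * / (2 * hF k chi y)).
    intro; unfold Rdiv; auto.
    apply D_mult. apply D_plus. apply D_plus; apply D_sq; eauto.
    apply D_mult. apply D_sq; eauto. apply D_plus; apply D_sq; eauto.
    apply D_inv. apply D_mult. apply D_const. apply Dh. lra. }
  cbv beta. rewrite Ek2. unfold hF in *. field. lra.
Qed.

Lemma DW (ur ui vr vi k2 : R -> R) x :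
  D ur x (vr x) -> D ui x (vi x) -> D vr x (- k2 x * ur x) -> D vi x (- k2 x * ui x) ->
  D (WF ur ui vr vi) x 0.
Proof. intros. unfold WF. eapply D_eq. apply D_minus; apply D_mult; eauto. ring. Qed.

Lemma P_nonneg k chi ur ui vr vi y : 0 < k -> 0 <= chi y -> 0 <= PF k chi ur ui vr vi y.
Proof. intros. unfold PF, hF. apply Rdiv_le_0_compat; [|lra]. 
  pose proof (pow2_ge_0 (vr y)); pose proof (pow2_ge_0 (vi y)); pose proof (pow2_ge_0 (ur y)); pose proof (pow2_ge_0 (ui y)).
  pose proof (pow2_ge_0 (k + chi y)). nra. Qed.

Lemma PW_nonneg k chi ur ui vr vi y : 0 < k -> 0 <= chi y ->
  0 <= PF k chi ur ui vr vi y ^2 - WF ur ui vr vi y ^2.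
Proof. intros. unfold PF, WF. rewrite P2W2 by (unfold hF; lra).
  apply Rdiv_le_0_compat. apply Rplus_le_le_0_compat; apply pow2_ge_0. unfold hF; nra. Qed.
Lemma sign_lem Pv Wv Pd sq eps Mc : 0 <= Pv -> 0 < sq -> sq^2 = Pv^2 - Wv^2 + eps -> 0 < eps ->
  0 <= Pv^2 - Wv^2 -> 0 <= Mc -> Rabs Pd <= Mc * sqrt (Pv^2 - Wv^2) ->
  - Mc * (Pv + sq) <= Pd + 2*Pv*Pd/(2*sq).
Proof. intros HP Hsq Esq He HPW HM HPd.
  assert (sqrt (Pv^2 - Wv^2) <= sq).
  { rewrite <- (sqrt_pow2 sq) by lra. apply sqrt_le_1_alt. lra. }
  assert (HPd2 : - (Mc * sq) <= Pd).
  { apply Rabs_le_inv in HPd. pose proof (Rmult_le_compat_l Mc _ _ HM H). lra. }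
  replace (Pd + 2*Pv*Pd/(2*sq)) with (Pd * ((Pv + sq) / sq)) by (field; lra).
  replace (- Mc * (Pv + sq)) with (- (Mc * sq) * ((Pv + sq) / sq)) by (field; lra).
  apply Rmult_le_compat_r; [apply Rdiv_le_0_compat; lra| auto]. Qed.

Section Psi.
Variables (ur ui vr vi k2 chi J : R -> R) (k eps c x : R).
Hypotheses (Hk : 0 < k) (He : 0 < eps) (Hchi : forall y, 0 <= chi y)
  (Dur : D ur x (vr x)) (Dui : D ui x (vi x)) (Dvr : D vr x (- k2 x * ur x)) (Dvi : D vi x (- k2 x * ui x))
  (Dchi : D chi x c) (DJ : D J x (chi x)) (Ek2 : k2 x = k^2 - chi x ^2).

Let Pv := PF k chi ur ui vr vi x.
Let Wv := WF ur ui vr vi x.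
Let hv := hF k chi x.
Let Pd := 2*chi x*(ur x*vr x+ui x*vi x) + c*(hF k chi x^2*(ur x^2+ui x^2) - (vr x^2+vi x^2))/(2*hF k chi x^2).
Let sq := sqrt (Pv^2 - Wv^2 + eps).
Let Gd := Pd + 2*Pv*Pd/(2*sq).

Lemma Q_pos : 0 < Pv^2 - Wv^2 + eps.
Proof. pose proof (PW_nonneg k chi ur ui vr vi x Hk (Hchi x)). unfold Pv, Wv. lra. Qed.

Lemma DG : D (GF k eps chi ur ui vr vi) x Gd.
Proof. unfold GF. eapply D_eq. apply D_plus.
  apply (DP ur ui vr vi k2 chi k c x); auto.
  apply D_sqrt. apply D_plus. apply D_minus; apply D_sq.
  apply (DP ur ui vr vi k2 chi k c x); auto. apply (DW ur ui vr vi k2 x); auto.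
  apply D_const. apply Q_pos. unfold Gd, sq, Pd, Pv, Wv. field. split.
  unfold hF; pose proof (Hchi x); lra. apply Rgt_not_eq, sqrt_lt_R0, Q_pos. Qed.

Lemma Gd_bound : - (Rabs c / hv + 2 * chi x) * (Pv + sq) <= Gd.
Proof. unfold Gd. apply (sign_lem Pv Wv Pd sq eps).
  - apply P_nonneg; auto.
  - apply sqrt_lt_R0, Q_pos.
  - unfold sq. rewrite <- Rsqr_pow2, Rsqr_sqrt; [auto| left; apply Q_pos].
  - auto.
  - apply PW_nonneg; auto.
  - pose proof (Rabs_pos c). pose proof (Hchi x). assert (0 < hv) by (unfold hv, hF; lra).
    assert (0 <= Rabs c / hv) by (apply Rdiv_le_0_compat; lra). lra.
  - unfold Pd, Pv, Wv, hv, PF, WF. apply key_ineq. unfold hF; pose proof (Hchi x); lra. auto.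
Qed.

Lemma hv_pos : 0 < hv.
Proof. unfold hv, hF; pose proof (Hchi x); lra. Qed.

Lemma Dh : D (hF k chi) x c.
Proof. unfold hF. eapply D_eq. apply D_plus. apply D_const. apply Dchi. cbv beta; ring. Qed.

Lemma DE : D (fun y => exp (2 * J y)) x (exp (2 * J x) * (2 * chi x)).
Proof. apply (D_exp (fun y => 2 * J y)). eapply D_eq. apply D_mult. apply D_const. apply DJ. cbv beta; ring. Qed.

Lemma G_val : GF k eps chi ur ui vr vi x = Pv + sq.
Proof. auto. Qed.

Lemma psi_up : 0 <= c -> exists d, D (fun y => GF k eps chi ur ui vr vi y * hF k chi y * exp (2 * J y)) x d /\ 0 <= d.
Proof. intros Hc. exists (exp (2 * J x) * (Gd * hv + (c + 2 * chi x * hv) * (Pv + sq))). split.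
  { eapply D_eq. apply D_mult. apply D_mult. apply DG. apply Dh. apply DE.
    cbv beta. rewrite G_val. unfold hv. ring. }
  pose proof hv_pos as Hh.
  pose proof Gd_bound as HG. rewrite Rabs_right in HG by lra.
  pose proof (exp_pos (2 * J x)). pose proof (P_nonneg k chi ur ui vr vi x Hk (Hchi x)).
  pose proof (sqrt_lt_R0 _ Q_pos). fold sq in H1. fold Pv in H0. pose proof (Hchi x).
  assert (HGd : - (c + 2 * chi x * hv) * (Pv + sq) <= Gd * hv).
  { replace (- (c + 2 * chi x * hv) * (Pv + sq)) with ((- (c / hv + 2 * chi x) * (Pv + sq)) * hv) by (field; lra).
    apply Rmult_le_compat_r; lra. }
  apply Rmult_le_pos; lra. Qed.

Lemma psi_down : c <= 0 -> exists d, D (fun y => GF k eps chi ur ui vr vi y * exp (2 * J y) / hF k chi y) x d /\ 0 <= d.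
Proof. intros Hc. pose proof hv_pos as Hh.
  exists (exp (2 * J x) / hv^2 * (Gd * hv + (- c + 2 * chi x * hv) * (Pv + sq))). split.
  { eapply D_eq. eapply derivable_pt_lim_ext with (f := fun y => GF k eps chi ur ui vr vi y * exp (2 * J y) * / hF k chi y).
    intro; unfold Rdiv; auto.
    apply D_mult. apply D_mult. apply DG. apply DE. apply D_inv. apply Dh. fold hv; lra.
    cbv beta. rewrite G_val. unfold hv in *. field. lra. }
  pose proof Gd_bound as HG. rewrite Rabs_left1 in HG by lra.
  pose proof (exp_pos (2 * J x)). pose proof (P_nonneg k chi ur ui vr vi x Hk (Hchi x)).
  pose proof (sqrt_lt_R0 _ Q_pos). fold sq in H1. fold Pv in H0. pose proof (Hchi x).
  assert (HGd : - (- c + 2 * chi x * hv) * (Pv + sq) <= Gd * hv).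
  { replace (- (- c + 2 * chi x * hv) * (Pv + sq)) with ((- (- c / hv + 2 * chi x) * (Pv + sq)) * hv) by (field; lra).
    apply Rmult_le_compat_r; lra. }
  apply Rmult_le_pos; [apply Rdiv_le_0_compat; nra|lra]. Qed.
End Psi.
Notation C := continuity_pt.
Lemma continuity_pt_ext f g x : (forall y, f y = g y) -> C f x -> C g x.
Proof. intros E H. replace g with f; auto. apply functional_extensionality; auto. Qed.
Lemma C_plus f g x : C f x -> C g x -> C (fun y => f y + g y) x.
Proof. intros; exact (continuity_pt_plus f g x H H0). Qed.
Lemma C_minus f g x : C f x -> C g x -> C (fun y => f y - g y) x.
Proof. intros; exact (continuity_pt_minus f g x H H0). Qed.
Lemma C_mult f g x : C f x -> C g x -> C (fun y => f y * g y) x.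
Proof. intros; exact (continuity_pt_mult f g x H H0). Qed.
Lemma C_const c x : C (fun _ => c) x.
Proof. apply continuity_pt_const. intros a b; auto. Qed.
Lemma C_inv f x : C f x -> f x <> 0 -> C (fun y => / f y) x.
Proof. intros; exact (continuity_pt_inv f x H H0). Qed.
Lemma C_comp f g x : C f x -> C g (f x) -> C (fun y => g (f y)) x.
Proof. intros; exact (continuity_pt_comp f g x H H0). Qed.
Lemma C_sqrt f x : C f x -> 0 <= f x -> C (fun y => sqrt (f y)) x.
Proof. intros. apply (C_comp f sqrt x H). apply continuity_pt_sqrt; auto. Qed.
Lemma C_exp f x : C f x -> C (fun y => exp (f y)) x.
Proof. intros. apply (C_comp f exp x H). apply derivable_continuous_pt, derivable_pt_exp. Qed.
Lemma C_sq f x : C f x -> C (fun y => f y ^ 2) x.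
Proof. intros. eapply continuity_pt_ext. 2: apply (C_mult f f x H H). intro; simpl; ring. Qed.
Lemma C_D f x l : D f x l -> C f x.
Proof. intros H. apply derivable_continuous_pt. exists l; exact H. Qed.

Lemma C_G k eps chi ur ui vr vi x : 0 < k -> 0 < eps -> (forall y, 0 <= chi y) ->
  C chi x -> C ur x -> C ui x -> C vr x -> C vi x -> C (GF k eps chi ur ui vr vi) x.
Proof. intros Hk He Hc Cc Cur Cui Cvr Cvi.
  assert (Ch : C (hF k chi) x) by (unfold hF; apply C_plus; auto using C_const).
  assert (CP : C (PF k chi ur ui vr vi) x).
  { unfold PF. eapply continuity_pt_ext with (f := fun y => (vr y ^ 2 + vi y ^ 2 + hF k chi y ^ 2 * (ur y ^ 2 + ui y ^ 2)) * / (2 * hF k chi y)).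
    intro; unfold Rdiv; auto.
    apply C_mult. apply C_plus. apply C_plus; apply C_sq; auto. apply C_mult. apply C_sq; auto. apply C_plus; apply C_sq; auto.
    apply C_inv. apply C_mult; auto using C_const. unfold hF; pose proof (Hc x); lra. }
  assert (CW : C (WF ur ui vr vi) x) by (unfold WF; apply C_minus; apply C_mult; auto).
  unfold GF. apply C_plus; auto. apply C_sqrt. apply C_plus. apply C_minus; apply C_sq; auto. apply C_const.
  pose proof (PW_nonneg k chi ur ui vr vi x Hk (Hc x)). lra. Qed.
Lemma cs1 x : cos x ^ 2 + sin x ^ 2 = 1.
Proof. pose proof (sin2_cos2 x). unfold Rsqr in H. nra. Qed.
Lemma bnd_minus F G : bnd F -> bnd G -> bnd (fun x => F x - G x).
Proof. intros [a Ha] [b Hb]; exists (a+b); intro x. unfold Rminus. eapply Rle_trans; [apply Rabs_triang|]. rewrite Rabs_Ropp. specialize (Ha x); specialize (Hb x); lra. Qed.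
Lemma bnd_opp F : bnd F -> bnd (fun x => - F x).
Proof. intros [a Ha]; exists a; intro x; rewrite Rabs_Ropp; auto. Qed.
Ltac solve_bnd := repeat (first [apply bnd_minus | apply bnd_plus | apply bnd_opp | apply bnd_mult | apply bnd_const | apply bnd_cos | apply bnd_sin]).

Lemma approx_inv2h s chi k : 0 < k -> (forall y, 0 <= chi y) -> lim s chi 0 ->
  approx s (fun y => / (2 * hF k chi y)) (fun _ => / (2 * k)).
Proof. intros Hk Hc L eps He. destruct (L (2 * k^2 * eps)) as [A HA]. { apply Rmult_lt_0_compat; nra. }
  exists A; intros x Hx. specialize (HA x Hx). specialize (Hc x). unfold hF. rewrite Rminus_0_r in *.
  rewrite Rabs_right in HA by lra.
  replace (/ (2 * (k + chi x)) - / (2 * k)) with (- (chi x / (2 * k * (k + chi x)))) by (field; lra).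
  rewrite Rabs_Ropp, Rabs_right by (apply Rle_ge, Rdiv_le_0_compat; nra).
  apply Rle_lt_trans with (chi x / (2 * k^2)).
  - unfold Rdiv. apply Rmult_le_compat_l; auto. apply Rinv_le_contravar; nra.
  - apply Rmult_lt_reg_r with (2 * k^2); [nra|]. field_simplify; nra. Qed.

Lemma approx_sq s f F : approx s f F -> bnd F -> approx s (fun x => f x ^2) (fun x => F x ^2).
Proof. intros. eapply approx_ext; [| |apply (approx_mult s f f F F H H H0 H0)]; intro; simpl; ring. Qed.
Lemma bnd_sq F : bnd F -> bnd (fun x => F x ^2).
Proof. intros. eapply bnd_ext; [|apply (bnd_mult F F H H)]. intro; simpl; ring. Qed.

Section Asym.
Variables (s : bool) (ur ui vr vi chi : R -> R) (k al be ga de : R).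
Hypotheses (Hk : 0 < k) (Hchi : forall y, 0 <= chi y) (Lchi : lim s chi 0)
  (Aur : approx s ur (fun x => al * cos (k*x) + be * sin (k*x)))
  (Aui : approx s ui (fun x => ga * cos (k*x) + de * sin (k*x)))
  (Avr : approx s vr (fun x => k * (be * cos (k*x) - al * sin (k*x))))
  (Avi : approx s vi (fun x => k * (de * cos (k*x) - ga * sin (k*x)))).

Lemma Wlim : lim s (WF ur ui vr vi) (k*(al*de - be*ga)).
Proof. apply approx_lim. unfold WF.
  eapply approx_ext; [intro; reflexivity| |apply approx_minus; apply approx_mult; eauto; solve_bnd].
  intro x. simpl. pose proof (cs1 (k*x)). 
  replace (k * (al * de - be * ga)) with (k * (al * de - be * ga) * (cos (k * x) ^ 2 + sin (k * x) ^ 2)) by (rewrite H; ring).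
  ring. Qed.

Lemma happrox : approx s (hF k chi) (fun _ => k).
Proof. unfold hF. eapply approx_ext; [intro; reflexivity| intro; simpl; apply Rplus_0_r|].
  apply approx_plus. apply approx_refl. apply lim_approx; auto. Qed.

Lemma Ylim : lim s (fun y => PF k chi ur ui vr vi y - WF ur ui vr vi y) (k*((be+ga)^2+(de-al)^2)/2).
Proof. apply approx_lim.
  set (P1 := fun x => k * (be * cos (k*x) - al * sin (k*x)) + k * (ga * cos (k*x) + de * sin (k*x))).
  set (P2 := fun x => k * (de * cos (k*x) - ga * sin (k*x)) - k * (al * cos (k*x) + be * sin (k*x))).
  assert (B1 : bnd P1) by (unfold P1; solve_bnd). assert (B2 : bnd P2) by (unfold P2; solve_bnd).
  assert (A1 : approx s (fun y => vr y + hF k chi y * ui y) P1).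
  { apply approx_plus; auto. apply approx_mult; auto using happrox, bnd_const. solve_bnd. }
  assert (A2 : approx s (fun y => vi y - hF k chi y * ur y) P2).
  { apply approx_minus; auto. apply approx_mult; auto using happrox, bnd_const. solve_bnd. }
  assert (A3 : approx s (fun y => ((vr y + hF k chi y * ui y)^2 + (vi y - hF k chi y * ur y)^2) * / (2 * hF k chi y))
                 (fun x => (P1 x ^2 + P2 x ^2) * / (2 * k))).
  { apply (approx_mult s _ _ (fun x => P1 x ^2 + P2 x ^2) (fun _ => /(2*k))).
    - apply approx_plus.
      + apply approx_sq; auto.
      + apply approx_sq; auto.
    - apply approx_inv2h; auto.
    - apply bnd_plus; apply bnd_sq; auto.
    - apply bnd_const. }
  eapply approx_ext; [| |exact A3].
  - intro y. unfold PF, WF. field. unfold hF; pose proof (Hchi y); lra.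
  - intro x. unfold P1, P2. pose proof (cs1 (k*x)).
    replace (k * ((be + ga) ^ 2 + (de - al) ^ 2) / 2) with
      (k * ((be + ga) ^ 2 + (de - al) ^ 2) / 2 * (cos (k * x) ^ 2 + sin (k * x) ^ 2)) by (rewrite H; ring).
    field. lra.
Qed.
End Asym.
Lemma D_opp f x a : D f x a -> D (fun y => - f y) x (- a).
Proof. intros; exact (derivable_pt_lim_opp f x a H). Qed.
Lemma const_of_D0 f : (forall x, D f x 0) -> forall a b, f a = f b.
Proof. intros H.
  assert (M : forall a b, a <= b -> f a <= f b /\ f b <= f a).
  { intros a b Hab. split.
    - apply (mon_base f); auto. intros; eapply C_D; eauto. intros; exists 0; split; auto; lra.
    - assert (- f a <= - f b); [|lra].
      apply (mon_base (fun y => - f y)); auto. intros; eapply C_D. apply D_opp. apply H.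
      intros; exists (- 0); split; [|lra]. apply D_opp. apply H. }
  intros a b. destruct (Rle_dec a b) as [h|h]; [destruct (M a b h)|destruct (M b a ltac:(lra))]; lra.
Qed.

Lemma lim_ineq F G L1 L2 K x0 : lim false F L1 -> lim true G L2 -> 0 < K ->
  (forall a b, a <= x0 <= b -> F a <= K * G b) -> L1 <= K * L2.
Proof. intros H1 H2 HK H. destruct (Rle_dec L1 (K * L2)) as [|n]; auto. exfalso.
  set (d := (L1 - K * L2) / 2).
  assert (Hd : 0 < d) by (unfold d; lra).
  destruct (H1 d Hd) as [A1 HA1]. destruct (H2 (d / K)) as [A2 HA2]. { apply Rdiv_lt_0_compat; auto. }
  set (a := Rmin A1 x0). set (b := Rmax A2 x0).
  specialize (HA1 a (Rmin_l _ _)). specialize (HA2 b (Rmax_l _ _)).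
  specialize (H a b (conj (Rmin_r _ _) (Rmax_r _ _))).
  apply Rabs_def2 in HA1. apply Rabs_def2 in HA2.
  assert (K * (G b - L2) < K * (d / K)) by (apply Rmult_lt_compat_l; lra).
  replace (K * (d / K)) with d in H0 by (field; lra). unfold d in *. lra.
Qed.

Lemma lim_G s k eps chi ur ui vr vi W0 Yl : 0 < k -> (forall y, 0 <= chi y) ->
  (forall y, WF ur ui vr vi y = W0) -> lim s (fun y => PF k chi ur ui vr vi y - WF ur ui vr vi y) Yl ->
  0 <= Yl*(Yl+2*W0)+eps ->
  lim s (GF k eps chi ur ui vr vi) (Yl + W0 + sqrt (Yl*(Yl+2*W0)+eps)).
Proof. intros Hk Hc HW HY Hpos.
  set (Y := fun y => PF k chi ur ui vr vi y - WF ur ui vr vi y) in *.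
  assert (E : forall y, Y y + W0 + sqrt (Y y * (Y y + 2 * W0) + eps) = GF k eps chi ur ui vr vi y).
  { intro y. unfold GF, Y. rewrite HW. f_equal. ring. f_equal. ring. }
  eapply lim_ext; [exact E|]. apply approx_lim.
  apply approx_plus. apply approx_plus. apply lim_approx; auto. apply approx_refl.
  apply lim_approx. apply (lim_comp_cont s (fun y => Y y * (Y y + 2 * W0) + eps) _ sqrt).
  - apply approx_lim. apply approx_plus; [|apply approx_refl]. apply approx_mult; try apply bnd_const.
    apply lim_approx; auto. apply approx_plus; [apply lim_approx; auto| apply approx_refl].
  - apply continuity_pt_sqrt; auto.
Qed.
Lemma int_nonneg f a b (pr : Riemann_integrable f a b) : a <= b -> (forall x, 0 <= f x) -> 0 <= RiemannInt pr.
Proof. intros Hab Hf. pose proof (RiemannInt_P15 (RiemannInt_P14 a b 0)) as E.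
  rewrite Rmult_0_l in E. rewrite <- E. apply RiemannInt_P19; auto; intros; unfold fct_cte; auto. Qed.

Lemma int_le_I f I : (forall x, 0 <= f x) -> improper_integral f I ->
  forall a b (pr : Riemann_integrable f a b), a <= b -> RiemannInt pr <= I.
Proof. intros Hf [Hint Hlim] a b pr Hab. destruct (Rle_dec (RiemannInt pr) I) as [|n]; auto. exfalso.
  destruct (Hlim (RiemannInt pr - I)) as [A HA]; [lra|].
  set (a' := Rmin a (-A)). set (b' := Rmax b A).
  assert (H1 : a' <= a) by apply Rmin_l. assert (H2 : b <= b') by apply Rmax_l.
  destruct (Hint a' a H1) as [p1]. destruct (Hint b b' H2) as [p3].
  destruct (Hint a' b ltac:(lra)) as [p2]. destruct (Hint a' b' ltac:(lra)) as [p4].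
  specialize (HA a' b' p4 (Rmin_r _ _) (Rmax_r _ _)).
  pose proof (RiemannInt_P26 p1 pr p2). pose proof (RiemannInt_P26 p2 p3 p4).
  pose proof (int_nonneg f a' a p1 H1 Hf). pose proof (int_nonneg f b b' p3 H2 Hf).
  apply Rabs_def2 in HA. lra. Qed.

Lemma prim_a (f : R -> R) a b (h : a <= b) (C0 : forall x, a <= x <= b -> continuity_pt f x) : primitive h (FTC_P1 h C0) a = 0.
Proof. unfold primitive. destruct (Rle_dec a a) as [r|n]; [|exfalso; apply n; lra]. destruct (Rle_dec a b) as [r0|n]; [|exfalso; apply n; lra].
  apply RiemannInt_P9. Qed.
Lemma prim_b (f : R -> R) a b (h : a <= b) (C0 : forall x, a <= x <= b -> continuity_pt f x) (pr : Riemann_integrable f a b) : primitive h (FTC_P1 h C0) b = RiemannInt pr.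
Proof. unfold primitive. destruct (Rle_dec a b) as [r|n]; [|exfalso; apply n; lra]. destruct (Rle_dec b b) as [r0|n]; [|exfalso; apply n; lra].
  apply RiemannInt_P5. Qed.
Lemma alg_fin Ga Gx Gb ha hx hb Ex Eb k M X Y : 0 < k -> 0 < Gb -> 0 < Gx -> 0 <= Ga -> k <= ha -> k <= hb -> 0 < hx -> hx <= k + M ->
  0 < Ex -> 0 < Eb -> Eb <= X -> Ga * ha * 1 <= Gx * hx * Ex -> Gx * Ex / hx <= Gb * Eb / hb ->
  (1 + M/k)^2 <= Y -> Ga <= Y * X * Gb.
Proof. intros.
  assert (A1 : Gx * Ex <= Gb * Eb * hx / hb).
  { apply Rmult_le_compat_r with (r := hx) in H11; [|lra].
    replace (Gx * Ex / hx * hx) with (Gx * Ex) in H11 by (field; lra).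
    replace (Gb * Eb * hx / hb) with (Gb * Eb / hb * hx) by (field; lra). auto. }
  assert (A2 : Ga * ha <= Gb * Eb * hx * hx / hb).
  { replace (Gb * Eb * hx * hx / hb) with ((Gb * Eb * hx / hb) * hx) by (field; lra).
    apply Rle_trans with (Gx * Ex * hx). lra. apply Rmult_le_compat_r; lra. }
  assert (A3 : Ga <= Gb * Eb * (hx * hx / (ha * hb))).
  { apply Rmult_le_reg_r with ha; [lra|]. 
    replace (Gb * Eb * (hx * hx / (ha * hb)) * ha) with (Gb * Eb * hx * hx / hb) by (field; lra). lra. }
  assert (A4 : hx * hx / (ha * hb) <= (1 + M/k)^2).
  { replace ((1 + M/k)^2) with ((k+M)*(k+M)/(k*k)) by (field; lra).
    apply Rle_trans with ((k+M)*(k+M)/(ha*hb)).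
    - unfold Rdiv. apply Rmult_le_compat_r. left; apply Rinv_0_lt_compat; nra. apply Rmult_le_compat; lra.
    - unfold Rdiv. apply Rmult_le_compat_l. nra. apply Rinv_le_contravar; nra. }
  assert (0 <= hx * hx / (ha * hb)) by (apply Rmult_le_pos; [nra| left; apply Rinv_0_lt_compat; nra]).
  apply Rle_trans with (Gb * Eb * (hx * hx / (ha * hb))); auto.
  replace (Y * X * Gb) with (Gb * (X * Y)) by ring. rewrite Rmult_assoc. apply Rmult_le_compat_l; [lra|].
  apply Rmult_le_compat; lra. Qed.
Lemma G_pos k eps chi ur ui vr vi y : 0 < k -> 0 < eps -> 0 <= chi y -> 0 < GF k eps chi ur ui vr vi y.
Proof. intros. unfold GF. pose proof (P_nonneg k chi ur ui vr vi y H H1).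
  pose proof (PW_nonneg k chi ur ui vr vi y H H1).
  pose proof (sqrt_lt_R0 (PF k chi ur ui vr vi y ^ 2 - WF ur ui vr vi y ^ 2 + eps) ltac:(lra)). lra. Qed.

Lemma interval_bound (ur ui vr vi k2 chi : R -> R) k eps M I x0 a b :
  0 < k -> 0 < eps -> (forall y, 0 <= chi y) -> continuity chi ->
  (forall y, D ur y (vr y)) -> (forall y, D ui y (vi y)) ->
  (forall y, D vr y (- k2 y * ur y)) -> (forall y, D vi y (- k2 y * ui y)) ->
  (forall y, k2 y = k^2 - chi y^2) -> piecewise_C1 chi ->
  (forall x y, x <= y <= x0 -> chi x <= chi y) -> (forall x y, x0 <= x <= y -> chi y <= chi x) ->
  (forall y, chi y <= M) -> improper_integral chi I -> a <= x0 <= b ->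
  GF k eps chi ur ui vr vi a <= exp (2*(M/k + I)) * GF k eps chi ur ui vr vi b.
Proof. intros Hk He Hc Cchi Dur Dui Dvr Dvi Ek2 Hpc Hup Hdn HM HI Hab.
  assert (Hab' : a <= b) by lra.
  assert (Cc : forall x, a <= x <= b -> C chi x) by (intros; apply Cchi).
  set (J := primitive Hab' (FTC_P1 Hab' Cc)).
  assert (DJ : forall x, a <= x <= b -> D J x (chi x)) by (intros; apply RiemannInt_P28; auto).
  assert (CJ : forall x, a <= x <= b -> C J x) by (intros; eapply C_D; eauto).
  assert (CG : forall x, C (GF k eps chi ur ui vr vi) x).
  { intro x. apply C_G; auto; eapply C_D; eauto. }
  assert (Ch : forall x, C (hF k chi) x) by (intro; unfold hF; apply C_plus; auto using C_const).
  assert (CE : forall x, a <= x <= b -> C (fun y => exp (2 * J y)) x).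
  { intros. apply (C_exp (fun y => 2 * J y)). apply C_mult; auto using C_const. }
  destruct Hpc as [Dset [f' [Hlf [Hd _]]]].
  set (G := GF k eps chi ur ui vr vi).
  assert (H1 : G a * hF k chi a * exp (2 * J a) <= G x0 * hF k chi x0 * exp (2 * J x0)).
  { apply (mon_lf (fun y => G y * hF k chi y * exp (2 * J y)) Dset a x0 Hlf); [lra| |].
    - intros. apply C_mult; [apply C_mult|]; auto. apply CE; lra.
    - intros x Hx Hn. destruct (Hd x Hn) as [Dc _].
      apply (psi_up ur ui vr vi k2 chi J k eps (f' x) x); auto. apply DJ; lra.
      apply (deriv_nondec chi x (f' x) x0); auto; lra. }
  assert (H2 : G x0 * exp (2 * J x0) / hF k chi x0 <= G b * exp (2 * J b) / hF k chi b).
  { apply (mon_lf (fun y => G y * exp (2 * J y) / hF k chi y) Dset x0 b Hlf); [lra| |].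
    - intros. eapply continuity_pt_ext with (f := fun y => G y * exp (2 * J y) * / hF k chi y).
      intro; unfold Rdiv; auto.
      apply C_mult; [apply C_mult|]; auto. apply CE; lra. apply C_inv; auto. unfold hF; pose proof (Hc x); lra.
    - intros x Hx Hn. destruct (Hd x Hn) as [Dc _].
      apply (psi_down ur ui vr vi k2 chi J k eps (f' x) x); auto. apply DJ; lra.
      apply (deriv_noninc chi x (f' x) x0); auto; lra. }
  assert (Ja : J a = 0) by (apply prim_a).
  set (pr := @continuity_implies_RiemannInt chi a b Hab' Cc).
  assert (Jb : J b = RiemannInt pr) by (apply prim_b).
  assert (JbI : J b <= I) by (rewrite Jb; apply int_le_I; auto).
  rewrite Ja, Rmult_0_r, exp_0 in H1.
  assert (HM0 : 0 <= M) by (pose proof (Hc a); pose proof (HM a); lra).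
  replace (2 * (M / k + I)) with (2 * (M/k) + 2 * I) by ring. rewrite exp_plus.
  apply (alg_fin _ (G x0) _ (hF k chi a) (hF k chi x0) (hF k chi b) (exp (2 * J x0)) (exp (2 * J b)) k M); auto.
  - apply G_pos; auto.
  - apply G_pos; auto.
  - left; apply G_pos; auto.
  - unfold hF; pose proof (Hc a); lra.
  - unfold hF; pose proof (Hc b); lra.
  - unfold hF; pose proof (Hc x0); lra.
  - unfold hF; pose proof (HM x0); lra.
  - apply exp_pos.
  - apply exp_pos.
  - destruct (Rle_lt_or_eq_dec _ _ JbI) as [h|h]; [left; apply exp_increasing; lra| rewrite h; lra].
  - replace (2 * (M/k)) with (M/k + M/k) by ring. rewrite exp_plus.
    pose proof (exp_ineq1_le (M/k)). assert (0 <= M/k) by (apply Rdiv_le_0_compat; lra). simpl; nra.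
Qed.
Lemma final_alg k q t K W0 : 0 < k -> 0 <= q -> 0 < K -> W0 = k*t -> W0 = k*(1-q) ->
  (forall eps, 0 < eps -> 2*k*q + W0 + sqrt (2*k*q*(2*k*q+2*W0)+eps) <= K*(0 + W0 + sqrt (0*(0+2*W0)+eps))) ->
  4*K/(K+1)^2 <= t.
Proof. intros Hk Hq HK E1 E2 H.
  set (rho := sqrt q).
  assert (Hr : 0 <= rho) by apply sqrt_pos.
  assert (Hr2 : rho * rho = q) by (apply sqrt_sqrt; auto).
  assert (Hmain : forall eps, 0 < eps -> k*(1+rho)^2 <= K*W0 + K*sqrt eps).
  { intros eps He. specialize (H eps He).
    replace (0 * (0 + 2 * W0) + eps) with eps in H by ring.
    replace (2*k*q*(2*k*q+2*W0)+eps) with (4*k^2*q + eps) in H by (rewrite E2; ring).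
    assert (sqrt (4*k^2*q) <= sqrt (4*k^2*q + eps)) by (apply sqrt_le_1_alt; lra).
    assert (sqrt (4*k^2*q) = 2*k*rho).
    { replace (4*k^2*q) with ((2*k*rho)^2) by (rewrite <- Hr2; ring). apply sqrt_pow2. nra. }
    rewrite E2 in H |- *. rewrite <- Hr2 in *. nra. }
  assert (Hm2 : k*(1+rho)^2 <= K*W0).
  { destruct (Rle_dec (k*(1+rho)^2) (K*W0)) as [|n]; auto. exfalso.
    set (d := k*(1+rho)^2 - K*W0). assert (Hd : 0 < d) by (unfold d; lra).
    specialize (Hmain ((d/(2*K))^2) ltac:(apply pow_lt; apply Rdiv_lt_0_compat; lra)).
    rewrite sqrt_pow2 in Hmain by (apply Rlt_le, Rdiv_lt_0_compat; lra).
    replace (K * (d / (2 * K))) with (d/2) in Hmain by (field; lra). unfold d in Hmain. lra. }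
  rewrite E2 in Hm2. rewrite <- Hr2 in Hm2.
  assert (H3 : 1 + rho <= K * (1 - rho)).
  { apply Rmult_le_reg_l with (k * (1 + rho)); [nra|]. nra. }
  assert (H4 : rho <= (K - 1)/(K + 1)).
  { apply Rmult_le_reg_r with (K+1); [lra|]. field_simplify; [|lra]. lra. }
  assert (Et : t = 1 - rho*rho). { rewrite Hr2. apply Rmult_eq_reg_l with k; [|lra]. lra. }
  rewrite Et.
  assert (rho * rho <= ((K-1)/(K+1)) * ((K-1)/(K+1))) by (apply Rmult_le_compat; lra).
  replace (4 * K / (K + 1) ^ 2) with (1 - ((K-1)/(K+1)) * ((K-1)/(K+1))) by (field; lra). lra.
Qed.

Lemma sech_sq S : (sech S)^2 = 4 * exp (2*S) / (exp (2*S) + 1)^2.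
Proof. unfold sech, cosh. replace (2*S) with (S + S) by ring. rewrite exp_plus, exp_Ropp.
  pose proof (exp_pos S). field. split; nra. Qed.

Lemma chi0 s (k2 : R -> R) k : (forall y, k2 y <= k^2) -> lim s k2 (k^2) -> lim s (fun y => sqrt (k^2 - k2 y)) 0.
Proof. intros Hb H eps He. destruct (H (eps^2)) as [A HA]; [nra|]. exists A; intros x Hx.
  specialize (HA x Hx). specialize (Hb x). rewrite Rminus_0_r, Rabs_right by (apply Rle_ge, sqrt_pos).
  rewrite <- (sqrt_pow2 eps) by lra. apply sqrt_lt_1_alt. split; [lra|].
  apply Rabs_def2 in HA. lra. Qed.
Theorem mainTheorem12
  (k2 : R -> R) (kinf : R)
  (hk : 0 < kinf)
  (hpc : piecewise_continuous k2)
  (hlimp : tends_to_pinf k2 (kinf ^ 2))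
  (hlimm : tends_to_minf k2 (kinf ^ 2))
  (hintp : integrable_near_pinf (fun x => k2 x - kinf ^ 2))
  (hintm : integrable_near_minf (fun x => k2 x - kinf ^ 2))
  (ur ui : R -> R) (rr ri tr ti : R)
  (hur : is_solution k2 ur) (hui : is_solution k2 ui)
  (hasm_re : tends_to_minf
     (fun x => ur x - (cos (kinf * x) + rr * cos (kinf * x) + ri * sin (kinf * x))) 0)
  (hasm_im : tends_to_minf
     (fun x => ui x - (sin (kinf * x) + ri * cos (kinf * x) - rr * sin (kinf * x))) 0)
  (hasp_re : tends_to_pinf
     (fun x => ur x - (tr * cos (kinf * x) - ti * sin (kinf * x))) 0)
  (hasp_im : tends_to_pinf
     (fun x => ui x - (tr * sin (kinf * x) + ti * cos (kinf * x))) 0)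
  (hbar : forall x, k2 x <= kinf ^ 2)
  (hchi_cont : continuity (fun x => sqrt (kinf ^ 2 - k2 x)))
  (hchi_pc1 : piecewise_C1 (fun x => sqrt (kinf ^ 2 - k2 x)))
  (hhump : exists x0 : R,
     (forall x y, x <= y <= x0 -> sqrt (kinf ^ 2 - k2 x) <= sqrt (kinf ^ 2 - k2 y)) /\
     (forall x y, x0 <= x <= y -> sqrt (kinf ^ 2 - k2 y) <= sqrt (kinf ^ 2 - k2 x)))
  (M : R)
  (hMub : forall x, sqrt (kinf ^ 2 - k2 x) <= M)
  (hMatt : exists x, sqrt (kinf ^ 2 - k2 x) = M)
  (I : R)
  (hI : improper_integral (fun x => sqrt (kinf ^ 2 - k2 x)) I) :
  transmission kinf kinf tr ti >= (sech (M / kinf + I)) ^ 2.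
Proof.
  set (chi := fun x => sqrt (kinf ^ 2 - k2 x)) in *.
  assert (Hc : forall y, 0 <= chi y) by (intro; apply sqrt_pos).
  assert (Ek2 : forall y, k2 y = kinf^2 - chi y^2).
  { intro y. unfold chi. rewrite <- (Rsqr_pow2 (sqrt _)), Rsqr_sqrt. ring. specialize (hbar y). lra. }
  assert (Ck2 : forall y, C k2 y).
  { intro y. apply (continuity_pt_ext (fun z => kinf^2 - chi z^2)). intro; rewrite Ek2; auto.
    apply C_minus. apply C_const. apply C_sq. apply hchi_cont. }
  destruct hur as [vr [Dur [_ Dvr0]]]. destruct hui as [vi [Dui [_ Dvi0]]].
  assert (Dvr : forall y, D vr y (- k2 y * ur y)) by (intro; apply Dvr0, Ck2).
  assert (Dvi : forall y, D vi y (- k2 y * ui y)) by (intro; apply Dvi0, Ck2).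
  set (W0 := WF ur ui vr vi 0).
  assert (HW : forall y, WF ur ui vr vi y = W0).
  { intro y. apply const_of_D0. intro; apply (DW ur ui vr vi k2); auto. }
  assert (Lp : lim true k2 (kinf^2)) by exact hlimp.
  assert (Lm : lim false k2 (kinf^2)) by exact hlimm.
  assert (Cp : lim true chi 0) by (apply chi0; auto).
  assert (Cm : lim false chi 0) by (apply chi0; auto).
  assert (Aurp : approx true ur (fun x => tr * cos (kinf*x) + (- ti) * sin (kinf*x))).
  { unfold approx. eapply lim_ext; [|exact hasp_re]. intro; simpl; ring. }
  assert (Auip : approx true ui (fun x => ti * cos (kinf*x) + tr * sin (kinf*x))).
  { unfold approx. eapply lim_ext; [|exact hasp_im]. intro; simpl; ring. }
  assert (Aurm : approx false ur (fun x => (1 + rr) * cos (kinf*x) + ri * sin (kinf*x))).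
  { unfold approx. eapply lim_ext; [|exact hasm_re]. intro; simpl; ring. }
  assert (Auim : approx false ui (fun x => ri * cos (kinf*x) + (1 - rr) * sin (kinf*x))).
  { unfold approx. eapply lim_ext; [|exact hasm_im]. intro; simpl; ring. }
  pose proof (asym true ur vr k2 kinf _ _ Dur Dvr Lp Aurp) as Avrp.
  pose proof (asym true ui vi k2 kinf _ _ Dui Dvi Lp Auip) as Avip.
  pose proof (asym false ur vr k2 kinf _ _ Dur Dvr Lm Aurm) as Avrm.
  pose proof (asym false ui vi k2 kinf _ _ Dui Dvi Lm Auim) as Avim.
  assert (W0p : W0 = kinf * (tr * tr - - ti * ti)).
  { apply (lim_unique_const true). eapply lim_ext; [intro; apply HW|]. apply Wlim; auto. }
  assert (W0m : W0 = kinf * ((1 + rr) * (1 - rr) - ri * ri)).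
  { apply (lim_unique_const false). eapply lim_ext; [intro; apply HW|]. apply Wlim; auto. }
  pose proof (Ylim true ur ui vr vi chi kinf _ _ _ _ hk Hc Cp Aurp Auip Avrp Avip) as Yp.
  pose proof (Ylim false ur ui vr vi chi kinf _ _ _ _ hk Hc Cm Aurm Auim Avrm Avim) as Ym.
  replace (kinf * ((- ti + ti) ^ 2 + (tr - tr) ^ 2) / 2) with 0 in Yp by field.
  replace (kinf * ((ri + ri) ^ 2 + (1 - rr - (1 + rr)) ^ 2) / 2) with (2 * kinf * (rr^2 + ri^2)) in Ym by field.
  destruct hhump as [x0 [Hup Hdn]].
  set (K := exp (2 * (M / kinf + I))).
  assert (HK : 0 < K) by apply exp_pos.
  assert (Hq : 0 <= rr^2 + ri^2) by nra.
  assert (Hfin : 4*K/(K+1)^2 <= tr^2 + ti^2).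
  { apply (final_alg kinf (rr^2+ri^2) (tr^2+ti^2) K W0 hk Hq HK).
    - rewrite W0p; ring.
    - rewrite W0m; ring.
    - intros eps He.
      apply (lim_ineq (GF kinf eps chi ur ui vr vi) (GF kinf eps chi ur ui vr vi) _ _ K x0).
      + apply lim_G; auto. rewrite W0m. nra.
      + apply lim_G; auto. lra.
      + auto.
      + intros a b Hab. apply (interval_bound ur ui vr vi k2 chi kinf eps M I x0 a b); auto. }
  unfold transmission. replace (kinf / kinf) with 1 by (field; lra).
  unfold K in Hfin. rewrite sech_sq. lra.
Qed.
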